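(* Let $N\geqslant 2$, $d\geqslant 1$ and $1\leqslant r\leqslant N$ be integers. Let $l_0,\dots,l_r$ be linearly independent linear forms on ${\mathbb C}^{N+1}$ and $\Pi=\{l_0=\dots=l_r=0\}\subset{\mathbb P}^N$. For each $i=1,\dots,r$ fix pairwise distinct constants $\lambda_{i0},\dots,\lambda_{i,d-1}\in{\mathbb C}$ with $\lambda_{i0}=0$. For $\underline e=(e_1,\dots,e_r)\in{\mathbb Z}^r_{\geqslant0}$ with all $e_i\leqslant d-1$ let $\Theta(\underline e)=\{l_i-\lambda_{i,e_i}l_0=0,\ i=1,\dots,r\}\subset{\mathbb P}^N$ (a linear subspace of codimension $r$ containing $\Pi$), and $|\underline e|=e_1+\dots+e_r$. Let $m\leqslant N-r+1$, and for every $\underline e$ with $|\underline e|\leqslant d-3$ let $S(\underline e)\subset\Theta(\underline e)\setminus\Pi$ be a set of $m$ linearly independent points. Then the set of $g\in{\cal P}_{d,N+1}$ satisfying $S(\underline e)\subset\mathop{\rm Sing}(g|_{\Theta(\underline e)})$ for all $\underline e\in{\mathbb Z}^r_{\geqslant0}$ with $|\underline e|\leqslant d-3$ is a linear subspace of ${\cal P}_{d,N+1}$ of codimension $m(N-r+1)|\Delta|$, where $\Delta=\{e_1\geqslant0,\dots,e_r\geqslant0,\ e_1+\dots+e_r\leqslant d-3\}\subset{\mathbb R}^r$ and $|\Delta|=\#(\Delta\cap{\mathbb Z}^r)$.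
   Context: ${\cal P}_{d,N+1}$ is the complex vector space of homogeneous polynomials of degree $d$ in $x_0,\dots,x_N$. For a linear subspace $\Theta\cong{\mathbb P}^{N-r}$, $\mathop{\rm Sing}(g|_\Theta)$ is the singular set of the hypersurface $\{g|_\Theta=0\}$ in $\Theta$, equal to $\Theta$ if $g|_\Theta\equiv0$. *)

(* Defs.v *)
From HB Require Import structures.
From mathcomp Require Import all_boot all_order all_algebra.
From mathcomp Require Import mpoly.
Set Implicit Arguments. Unset Strict Implicit. Unset Printing Implicit Defensive.
Import Order.TTheory GRing.Theory Num.Theory.
Local Open Scope ring_scope.

Definition hmonom (n d : nat) := {mm : 'X_{1..n < d.+1} | mdeg (val mm) == d}.

(* P_{d,n}: homogeneous polynomials of degree d in n variables, represented
   by their coefficient vectors (one coordinate per degree-d monomial). *)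
Definition Pdn (C : fieldType) (n d : nat) := 'rV[C]_(#|{: hmonom n d}|).

Definition poly_of (C : fieldType) (n d : nat) (g : Pdn C n d) : {mpoly C[n]} :=
  \sum_(h : hmonom n d) g 0 (enum_rank h) *: 'X_[val (val h)].

Definition lform (C : fieldType) (k n : nat) (L : 'M[C]_(k, n)) (j : 'I_k)
  (x : 'rV[C]_n) : C := \sum_(t < n) L j t * x 0 t.

Definition evalv (C : fieldType) (n : nat) (p : {mpoly C[n]}) (x : 'rV[C]_n) : C :=
  p.@[fun t => x 0 t].

(* Sing(p|_Theta) where Theta = P(W) and W = {v | inW v} a linear subspace;
   x is (a representative of) a point of P^{n-1}: x lies in Sing(p|_Theta)
   iff x is a nonzero vector of W, p(x) = 0 and every partial derivative of the
   restriction p|_W vanishes at x, i.e. every directional derivative of p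
   along vectors of W vanishes at x. *)
Definition in_Sing_restr (C : fieldType) (n : nat) (p : {mpoly C[n]})
  (inW : 'rV[C]_n -> Prop) (x : 'rV[C]_n) : Prop :=
  [/\ x != 0, inW x, evalv p x = 0 &
      forall v, inW v -> \sum_(t < n) v 0 t * evalv (mderiv t p) x = 0].

(* The linear forms l_0,...,l_r are the rows of L : 'M_(r.+1, n);
   l_0 = row ord0, l_i = row (lift ord0 i') for i' : 'I_r (i = i'+1). *)
(* Membership of a vector v of C^{N+1} in the linear subspace W(e) whose
   projectivisation is Theta(e) = {l_i - lambda_{i,e_i} l_0 = 0, i=1..r}. *)
Definition inTheta (C : fieldType) (r n d : nat) (L : 'M[C]_(r.+1, n))
  (lam : 'I_r -> 'I_d -> C) (e : {ffun 'I_r -> 'I_d}) (v : 'rV[C]_n) : Prop :=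
  forall i : 'I_r, lform L (lift ord0 i) v - lam i (e i) * lform L ord0 v = 0.

Definition inPi (C : fieldType) (r n : nat) (L : 'M[C]_(r.+1, n)) (v : 'rV[C]_n) : Prop :=
  forall j : 'I_r.+1, lform L j v = 0.

Definition esize (r d : nat) (e : {ffun 'I_r -> 'I_d}) : nat := (\sum_(i < r) val (e i))%N.

(* e in Delta, i.e. |e| <= d - 3 (with the integer, not truncated, d - 3). *)
Definition inDelta (r d : nat) (e : {ffun 'I_r -> 'I_d}) : bool := (esize e + 3 <= d)%N.

(* Main.v *)
Require Import Defs.
From HB Require Import structures.
From mathcomp Require Import all_boot all_order all_algebra.
From mathcomp Require Import mpoly.
From mathcomp Require Import ring zify.
Set Implicit Arguments. Unset Strict Implicit. Unset Printing Implicit Defensive.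
Import Order.TTheory GRing.Theory Num.Theory.
Local Open Scope ring_scope.

Definition lin (C : fieldType) n (c x : 'rV[C]_n) : C := \sum_(t < n) c 0 t * x 0 t.
Definition linp (C : fieldType) n (c : 'rV[C]_n) : {mpoly C[n]} := \sum_(t < n) c 0 t *: 'X_t.
Definition Dir (C : fieldType) n (p : {mpoly C[n]}) (v x : 'rV[C]_n) : C :=
  \sum_(t < n) v 0 t * evalv (mderiv t p) x.

Lemma evalvD (C : fieldType) n (p q : {mpoly C[n]}) x : evalv (p + q) x = evalv p x + evalv q x.
Proof. by rewrite /evalv mevalD. Qed.
Lemma evalvZ (C : fieldType) n a (p : {mpoly C[n]}) x : evalv (a *: p) x = a * evalv p x.
Proof. by rewrite /evalv mevalZ. Qed.
Lemma evalvM (C : fieldType) n (p q : {mpoly C[n]}) x : evalv (p * q) x = evalv p x * evalv q x.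
Proof. by rewrite /evalv mevalM. Qed.
Lemma evalv1 (C : fieldType) n (x : 'rV[C]_n) : evalv 1 x = 1.
Proof. by rewrite /evalv meval1. Qed.
Lemma evalvX (C : fieldType) n (p : {mpoly C[n]}) k x : evalv (p ^+ k) x = evalv p x ^+ k.
Proof. by rewrite /evalv rmorphXn. Qed.
Lemma evalv_sum (C : fieldType) n I (s : seq I) (P : pred I) (F : I -> {mpoly C[n]}) x :
  evalv (\sum_(i <- s | P i) F i) x = \sum_(i <- s | P i) evalv (F i) x.
Proof. by rewrite /evalv raddf_sum. Qed.
Lemma evalv_prod (C : fieldType) n I (s : seq I) (P : pred I) (F : I -> {mpoly C[n]}) x :
  evalv (\prod_(i <- s | P i) F i) x = \prod_(i <- s | P i) evalv (F i) x.
Proof. by rewrite /evalv rmorph_prod. Qed.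
Lemma evalv_Xt (C : fieldType) n (t : 'I_n) (x : 'rV[C]_n) : evalv 'X_t x = x 0 t.
Proof. by rewrite /evalv mevalXU. Qed.

Lemma evalv_lin (C : fieldType) n (c x : 'rV[C]_n) : evalv (linp c) x = lin c x.
Proof. rewrite /linp evalv_sum; apply: eq_bigr => t _; by rewrite evalvZ evalv_Xt. Qed.

Lemma evalv_dXt (C : fieldType) n (s t : 'I_n) (x : 'rV[C]_n) :
  evalv (mderiv t 'X_s) x = (s == t)%:R.
Proof.
rewrite mderivX mnm1E evalvZ; case: eqP => [->|]; last by rewrite mul0r.
have -> : (U_(t) - U_(t))%MM = 0%MM by apply/mnmP => j; rewrite !mnmE subnn.
by rewrite mpolyX0 evalv1 mulr1.
Qed.

Lemma DirD (C : fieldType) n (p q : {mpoly C[n]}) v x : Dir (p + q) v x = Dir p v x + Dir q v x.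
Proof. rewrite /Dir -big_split; apply: eq_bigr => t _; by rewrite mderivD evalvD mulrDr. Qed.
Lemma DirZ (C : fieldType) n a (p : {mpoly C[n]}) v x : Dir (a *: p) v x = a * Dir p v x.
Proof. rewrite /Dir mulr_sumr; apply: eq_bigr => t _; by rewrite mderivZ evalvZ mulrCA. Qed.
Lemma Dir_sum (C : fieldType) n I (s : seq I) (P : pred I) (F : I -> {mpoly C[n]}) v x :
  Dir (\sum_(i <- s | P i) F i) v x = \sum_(i <- s | P i) Dir (F i) v x.
Proof.
elim: s => [|a s IH]; first by rewrite !big_nil /Dir big1 // => t _; rewrite mderiv0 /evalv meval0 mulr0.
rewrite !big_cons; case: (P a) => //. by rewrite DirD IH.
Qed.
Lemma DirM (C : fieldType) n (p q : {mpoly C[n]}) v x :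
  Dir (p * q) v x = Dir p v x * evalv q x + evalv p x * Dir q v x.
Proof.
rewrite /Dir mulr_suml mulr_sumr -big_split; apply: eq_bigr => t _.
rewrite mderivM evalvD !evalvM mulrDr mulrA; congr (_ + _); by rewrite mulrCA.
Qed.
Lemma Dir1 (C : fieldType) n (v x : 'rV[C]_n) : Dir 1 v x = 0.
Proof. rewrite /Dir big1 // => t _; by rewrite -mpolyC1 mderivC /evalv meval0 mulr0. Qed.
Lemma Dir_lin (C : fieldType) n (c v x : 'rV[C]_n) : Dir (linp c) v x = lin c v.
Proof.
rewrite /linp Dir_sum /lin; apply: eq_bigr => s _.
rewrite DirZ /Dir (bigD1 s) //= big1 => [|t /negbTE ts]; last by rewrite evalv_dXt eq_sym ts mulr0.
by rewrite evalv_dXt eqxx mulr1 addr0 mulrC.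
Qed.
Lemma DirX (C : fieldType) n (p : {mpoly C[n]}) k v x :
  Dir (p ^+ k) v x = k%:R * evalv p x ^+ k.-1 * Dir p v x.
Proof.
elim: k => [|k IH]; first by rewrite expr0 Dir1 !mul0r.
rewrite exprS DirM IH evalvX; case: k {IH} => [|k] /=.
  by rewrite !expr0 !mul0r mulr0 addr0 mulr1 !mul1r.
rewrite exprS [k.+2%:R]mulrS; ring.
Qed.


Lemma Euler_prod (C : fieldType) n I (s : seq I) (F : I -> {mpoly C[n]}) (k : I -> nat) (x : 'rV[C]_n) :
  (forall i, Dir (F i) x x = (k i)%:R * evalv (F i) x) ->
  Dir (\prod_(i <- s) F i) x x = (\sum_(i <- s) k i)%:R * evalv (\prod_(i <- s) F i) x.
Proof.
move=> H; elim: s => [|a s IH]; first by rewrite !big_nil Dir1 mul0r.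
by rewrite !big_cons DirM IH H evalvM natrD; ring.
Qed.

Lemma Euler_X (C : fieldType) n (m : 'X_{1..n}) (x : 'rV[C]_n) :
  Dir 'X_[m] x x = (mdeg m)%:R * evalv 'X_[m] x.
Proof.
rewrite mpolyXE_id mdegE.
apply: Euler_prod => t; rewrite DirX evalvX.
have -> : Dir 'X_t x x = evalv 'X_t x.
  rewrite /Dir (bigD1 t) //= evalv_dXt eqxx mulr1 big1 ?addr0 ?evalv_Xt // => s /negbTE st.
  by rewrite evalv_dXt eq_sym st mulr0.
case: (m t) => [|k] /=; first by rewrite !mul0r.
by rewrite exprS; ring.
Qed.

Lemma Euler_poly_of (C : fieldType) n d (g : Pdn C n d) (x : 'rV[C]_n) :
  Dir (poly_of g) x x = d%:R * evalv (poly_of g) x.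
Proof.
rewrite /poly_of Dir_sum evalv_sum mulr_sumr; apply: eq_bigr => h _.
rewrite DirZ evalvZ Euler_X; have /eqP -> := svalP h; ring.
Qed.

Lemma linp_homog (C : fieldType) n (c : 'rV[C]_n) : linp c \is 1.-homog.
Proof.
rewrite /linp; apply: rpred_sum => t _; apply: rpredZ.
rewrite dhomogX; apply/eqP; exact: mdeg1.
Qed.

Lemma poly_of_surj (C : fieldType) n d (p : {mpoly C[n]}) :
  p \is d.-homog -> exists g : Pdn C n d, poly_of g = p.
Proof.
move=> hp.
exists (\row_i p@_(val (val (enum_val i)))).
apply/mpolyP => m.
rewrite /poly_of raddf_sum /=.
under eq_bigr => h _ do rewrite mxE enum_rankK mcoeffZ mcoeffX.
case: (eqVneq (mdeg m) d) => [md|mnd].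
  have hb : (mdeg m < d.+1)%N by rewrite md.
  have hh : mdeg (val (BMultinom hb)) == d by rewrite /= md.
  pose h0 : hmonom n d := exist _ (BMultinom hb) hh.
  rewrite (bigD1 h0) //= big1 ?addr0 ?eqxx ?mulr1 // => h hne.
  case: eqP => [E|]; last by rewrite mulr0.
  exfalso; move/eqP: hne; apply; apply: val_inj; apply: val_inj => /=; exact: E.
rewrite (dhomog_nemf_coeff hp mnd) big1 // => h _.
case: eqP => [E|]; last by rewrite mulr0.
by move: (svalP h); rewrite E (negbTE mnd).
Qed.


Lemma lin_col (C : fieldType) n k p (Q : 'M[C]_(n, k)) (A : 'M[C]_(p, n)) i j :
  lin (col j Q)^T (row i A) = (A *m Q) i j.
Proof. rewrite /lin mxE; apply: eq_bigr => t _; by rewrite !mxE mulrC. Qed.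

Lemma linD (C : fieldType) n (c1 c2 x : 'rV[C]_n) : lin (c1 + c2) x = lin c1 x + lin c2 x.
Proof. rewrite /lin -big_split; apply: eq_bigr => t _; by rewrite mxE mulrDl. Qed.
Lemma linZ (C : fieldType) n a (c x : 'rV[C]_n) : lin (a *: c) x = a * lin c x.
Proof. rewrite /lin mulr_sumr; apply: eq_bigr => t _; by rewrite mxE mulrA. Qed.
Lemma linB (C : fieldType) n (c1 c2 x : 'rV[C]_n) : lin (c1 - c2) x = lin c1 x - lin c2 x.
Proof. by rewrite linD -scaleN1r linZ mulN1r. Qed.
Lemma lin_xD (C : fieldType) n (c x y : 'rV[C]_n) : lin c (x + y) = lin c x + lin c y.
Proof. rewrite /lin -big_split; apply: eq_bigr => t _; by rewrite mxE mulrDr. Qed.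
Lemma lin_xZ (C : fieldType) n a (c x : 'rV[C]_n) : lin c (a *: x) = a * lin c x.
Proof. rewrite /lin mulr_sumr; apply: eq_bigr => t _; by rewrite mxE mulrCA. Qed.

Lemma Dir_mulmx (C : fieldType) n k (p : {mpoly C[n]}) (a : 'rV[C]_k) (K : 'M[C]_(k, n)) x :
  Dir p (a *m K) x = \sum_(j < k) a 0 j * Dir p (row j K) x.
Proof.
rewrite /Dir; under eq_bigr => t _ do rewrite mxE mulr_suml.
rewrite exchange_big /=; apply: eq_bigr => j _; rewrite mulr_sumr.
by apply: eq_bigr => t _; rewrite mxE mulrA.
Qed.

Lemma Dir_lincomb (C : fieldType) n (p : {mpoly C[n]}) v x :
  Dir p v x = lin (\row_t evalv (mderiv t p) x) v.
Proof. rewrite /Dir /lin; apply: eq_bigr => t _; by rewrite mxE mulrC. Qed.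

Lemma Euler_homog (C : fieldType) n k (p : {mpoly C[n]}) (x : 'rV[C]_n) :
  p \is k.-homog -> Dir p x x = k%:R * evalv p x.
Proof.
move=> /dhomogP hp; rewrite [p]mpolyE Dir_sum evalv_sum mulr_sumr.
rewrite big_seq_cond [X in _ = X]big_seq_cond; apply: eq_bigr => m /andP[mi _].
by rewrite DirZ evalvZ Euler_X (hp m mi) mulrCA.
Qed.

Lemma homog_prod_seq (C : fieldType) n I (s : seq I) (P : pred I) (F : I -> {mpoly C[n]}) (k : I -> nat) :
  (forall i, P i -> F i \is (k i).-homog) ->
  \prod_(i <- s | P i) F i \is (\sum_(i <- s | P i) k i)%N.-homog.
Proof.
move=> H; elim: s => [|a s IH]; first by rewrite !big_nil dhomog1.
rewrite !big_cons; case Pa: (P a) => //; exact: dhomogM (H a Pa) IH.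
Qed.

Lemma poly_ofD (C : fieldType) n d a (g1 g2 : Pdn C n d) :
  poly_of (a *: g1 + g2) = a *: poly_of g1 + poly_of g2.
Proof.
rewrite /poly_of scaler_sumr -big_split; apply: eq_bigr => h _.
by rewrite !mxE scalerDl scalerA.
Qed.

Definition Phi (C : fieldType) n d (I : finType) (w s : I -> 'rV[C]_n) (g : Pdn C n d) : 'rV[C]_#|{: I}| :=
  \row_j Dir (poly_of g) (w (enum_val j)) (s (enum_val j)).

Lemma Phi_is_linear (C : fieldType) n d (I : finType) (w s : I -> 'rV[C]_n) :
  linear (@Phi C n d I w s).
Proof.
move=> a g1 g2; apply/rowP => j; rewrite !mxE poly_ofD DirD DirZ; done.
Qed.

HB.instance Definition _ (C : fieldType) n d (I : finType) (w s : I -> 'rV[C]_n) :=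
  GRing.isLinear.Build C (Pdn C n d) 'rV[C]_#|{: I}| _ (@Phi C n d I w s) (@Phi_is_linear C n d I w s).

Lemma Phi_sum (C : fieldType) n d (I : finType) (w s : I -> 'rV[C]_n) (g : Pdn C n d) :
  Phi w s g = \sum_(i : I) Dir (poly_of g) (w i) (s i) *: delta_mx 0 (enum_rank i).
Proof.
rewrite [LHS]row_sum_delta (reindex enum_rank) /=; last first.
  by exists enum_val => x _; [rewrite enum_rankK | rewrite enum_valK].
by apply: eq_bigr => i _; rewrite mxE enum_rankK.
Qed.

Lemma Phi_eq0 (C : fieldType) n d (I : finType) (w s : I -> 'rV[C]_n) (g : Pdn C n d) :
  Phi w s g = 0 <-> forall i, Dir (poly_of g) (w i) (s i) = 0.
Proof.
split => [H i|H].
  by move/rowP: H => /(_ (enum_rank i)); rewrite !mxE enum_rankK.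
by apply/rowP => j; rewrite !mxE H.
Qed.


Lemma exists_basis (C : fieldType) p q k (A : 'M[C]_(p, q)) :
  \rank A = k -> exists K : 'M_(k, q), row_free K /\ (K :=: A)%MS.
Proof. move=> <-; exists (row_base A); split; [exact: row_base_free | exact: eq_row_base]. Qed.

Lemma Wbasis (C : fieldType) N r (L : 'M[C]_(r.+1, N.+1)) (mu : 'I_r -> C) :
  row_free L -> (r <= N)%N ->
  exists K : 'M[C]_(N - r + 1, N.+1), row_free K /\
    (forall v : 'rV_(N.+1),
       (forall i, lform L (lift ord0 i) v - mu i * lform L ord0 v = 0) <-> (v <= K)%MS).
Proof.
move=> HL Hr.
pose B : 'M[C]_(N.+1, r) := \matrix_(t, i) (L (lift ord0 i) t - mu i * L ord0 t).
pose T : 'M[C]_(r, r.+1) := \matrix_(i, j) ((j == lift ord0 i)%:R - (j == ord0)%:R * mu i).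
have BT : B^T = T *m L.
  apply/matrixP => i t; rewrite !mxE big_ord_recl !mxE /=.
  rewrite (bigD1 i) //= big1 => [|j /negbTE ji]; last first.
    by rewrite !mxE (inj_eq (@lift_inj _ ord0)) ji /= mul0r subr0 mul0r.
  rewrite !mxE eqxx /=; ring.
have l0 : forall j : 'I_r, (lift ord0 j == ord0) = false.
  by move=> j'; rewrite eq_sym (negbTE (neq_lift _ _)).
have Tfree : row_free T.
  apply/row_freeP; exists (\matrix_(j, k) (j == lift ord0 k)%:R).
  apply/matrixP => i k; rewrite !mxE big_ord_recl !mxE /=.
  rewrite (bigD1 k) //= big1 => [|j /negbTE jk]; last first.
    by rewrite !mxE !(inj_eq (@lift_inj _ ord0)) jk l0 /= mulr0.
  rewrite !mxE !(inj_eq (@lift_inj _ ord0)) l0 eqxx (eq_sym k i) /=; ring.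
have rB : \rank B = r by rewrite -mxrank_tr BT mxrankMfree //; apply/eqP.
have rK : \rank (kermx B) = (N - r + 1)%N by rewrite mxrank_ker rB; lia.
have [K [Kfree KE]] := exists_basis rK.
exists K; split => // v; rewrite KE sub_kermx.
have vB : forall i, (v *m B) 0 i = lform L (lift ord0 i) v - mu i * lform L ord0 v.
  move=> i; rewrite !mxE /lform mulr_sumr -sumrB; apply: eq_bigr => t _.
  by rewrite !mxE mulrBr mulrCA (mulrC (v 0 t)) (mulrC (v 0 t)).
split => [H|/eqP H i]; last by rewrite -vB H mxE.
by apply/eqP/rowP => i; rewrite vB H mxE.
Qed.


Definition lrow (C : fieldType) r n d (L : 'M[C]_(r.+1, n)) (lam : 'I_r -> 'I_d -> C) i j : 'rV[C]_n :=
  row (lift ord0 i) L - lam i j *: row ord0 L.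

Definition hpoly (C : fieldType) r n d (L : 'M[C]_(r.+1, n)) (lam : 'I_r -> 'I_d -> C)
  (e : {ffun 'I_r -> 'I_d}) : {mpoly C[n]} :=
  \prod_(i < r) \prod_(j < d | (j < e i)%N) linp (lrow L lam i j).

Lemma lin_lrow (C : fieldType) r n d (L : 'M[C]_(r.+1, n)) (lam : 'I_r -> 'I_d -> C) i j x :
  lin (lrow L lam i j) x = lform L (lift ord0 i) x - lam i j * lform L ord0 x.
Proof.
rewrite /lrow linB linZ /lin /lform; congr (_ - _ * _); apply: eq_bigr => t _; by rewrite mxE.
Qed.

Lemma hpoly_homog (C : fieldType) r n d (L : 'M[C]_(r.+1, n)) (lam : 'I_r -> 'I_d -> C) e :
  hpoly L lam e \is (esize e).-homog.
Proof.
rewrite /hpoly /esize; apply: homog_prod_seq => i _.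
have -> : (val (e i) = \sum_(j < d | (j < e i)%N) 1)%N.
  have -> : (\sum_(j < d | (j < e i)%N) 1 = \sum_(j < d | predT j && (j < e i)%N) 1)%N by apply: eq_bigl.
  rewrite (big_ord_narrow_cond (ltnW (ltn_ord (e i)))) /= sum1_card card_ord //.
apply: homog_prod_seq => j _; exact: linp_homog.
Qed.

Lemma hpoly_eval_neq0 (C : fieldType) r n d (L : 'M[C]_(r.+1, n)) (lam : 'I_r -> 'I_d -> C) e x :
  (forall i, injective (lam i)) -> inTheta L lam e x -> lform L ord0 x != 0 ->
  evalv (hpoly L lam e) x != 0.
Proof.
move=> Hinj Hx H0; rewrite /hpoly evalv_prod prodf_seq_neq0; apply/allP => i _ /=.
rewrite evalv_prod prodf_seq_neq0; apply/allP => j _; apply/implyP => ji.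
rewrite evalv_lin lin_lrow.
have -> : lform L (lift ord0 i) x = lam i (e i) * lform L ord0 x.
  by apply/eqP; rewrite -subr_eq0; apply/eqP; exact: Hx.
rewrite -mulrBl mulf_neq0 // subr_eq0; apply/eqP => /Hinj E.
by move: ji; rewrite E ltnn.
Qed.

Lemma factor_vanish (C : fieldType) n (l q : {mpoly C[n]}) w x :
  evalv l x = 0 -> Dir l w x = 0 -> evalv (l * q) x = 0 /\ Dir (l * q) w x = 0.
Proof. by move=> H1 H2; rewrite evalvM DirM H1 H2 !mul0r add0r. Qed.

Lemma hpoly_vanish (C : fieldType) r n d (L : 'M[C]_(r.+1, n)) (lam : 'I_r -> 'I_d -> C) (e e' : {ffun 'I_r -> 'I_d}) (i0 : 'I_r) w x :
  (e' i0 < e i0)%N -> inTheta L lam e' w -> inTheta L lam e' x ->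
  evalv (hpoly L lam e) x = 0 /\ Dir (hpoly L lam e) w x = 0.
Proof.
move=> lt Hw Hx; rewrite /hpoly (bigD1 i0) //= (bigD1 (e' i0)) //= -mulrA.
apply: factor_vanish; first by rewrite evalv_lin lin_lrow; exact: Hx.
by rewrite Dir_lin lin_lrow; exact: Hw.
Qed.

Lemma esize_lt r d (e e' : {ffun 'I_r -> 'I_d}) :
  (forall t, e t <= e' t)%N -> e != e' -> (esize e < esize e')%N.
Proof.
move=> H ne.
have := @leqif_sum 'I_r predT (fun i => val (e i) == val (e' i)) (fun i => val (e i))
  (fun i => val (e' i)) (fun i _ => leqif_eq (H i)).
move=> [le eqE]; rewrite /esize ltn_neqAle le eqE andbT.
apply: contra ne => /forallP He; apply/eqP/ffunP => i; apply: val_inj; apply/eqP; exact: He.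
Qed.

Lemma l0_neq0 (C : fieldType) r n d (L : 'M[C]_(r.+1, n)) (lam : 'I_r -> 'I_d -> C) e x :
  inTheta L lam e x -> ~ inPi L x -> lform L ord0 x != 0.
Proof.
move=> Hx HPi; apply/eqP => H0; apply: HPi => j; case: (unliftP ord0 j) => [i ->|->] //.
by have := Hx i; rewrite H0 mulr0 subr0.
Qed.

Lemma P1_other (C : fieldType) n (h : {mpoly C[n]}) (phi c w x : 'rV[C]_n) D :
  (3 <= D)%N -> lin phi x = 0 -> Dir (h * (linp phi ^+ D.-1 * linp c)) w x = 0.
Proof.
move=> HD H0; rewrite DirM DirM DirX !evalvM !evalvX !evalv_lin H0 !Dir_lin.
rewrite !expr0n /=; case: D HD => [|[|[|D]]] //= _; ring.
Qed.

Lemma P1_same (C : fieldType) n (h : {mpoly C[n]}) (phi c w x : 'rV[C]_n) D :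
  lin phi x = 1 -> lin c x = 0 -> Dir (h * (linp phi ^+ D.-1 * linp c)) w x = evalv h x * lin c w.
Proof.
move=> H1 H0; rewrite DirM DirM DirX !evalvM !evalvX !evalv_lin H1 H0 !Dir_lin !expr1n.
ring.
Qed.

Lemma P2_other (C : fieldType) n (h : {mpoly C[n]}) (phi w x : 'rV[C]_n) D :
  (2 <= D)%N -> lin phi x = 0 -> Dir (h * linp phi ^+ D) w x = 0.
Proof.
move=> HD H0; rewrite DirM DirX !evalvX !evalv_lin H0 !Dir_lin.
case: D HD => [|[|D]] //= _; rewrite ?expr0n /=; ring.
Qed.

Lemma P2_same (C : fieldType) n (h : {mpoly C[n]}) (phi w x : 'rV[C]_n) D :
  lin phi x = 1 -> Dir (h * linp phi ^+ D) w x = Dir h w x + evalv h x * D%:R * lin phi w.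
Proof.
move=> H1; rewrite DirM DirX !evalvX !evalv_lin H1 !Dir_lin !expr1n.
ring.
Qed.

Unset Implicit Arguments.

Theorem proposition2p2 (C : numClosedFieldType) (N d r m : nat)
  (HN : (2 <= N)%N) (Hd : (1 <= d)%N) (Hr1 : (1 <= r)%N) (HrN : (r <= N)%N)
  (L : 'M[C]_(r.+1, N.+1)) (HL : row_free L)
  (lam : 'I_r -> 'I_d -> C)
  (Hlam_inj : forall i : 'I_r, injective (lam i))
  (Hlam0 : forall (i : 'I_r) (k : 'I_d), val k = 0%N -> lam i k = 0)
  (Hm : (m <= N - r + 1)%N)
  (S : {ffun 'I_r -> 'I_d} -> 'M[C]_(m, N.+1))
  (HSfree : forall e, inDelta e -> row_free (S e))
  (HSTheta : forall e, inDelta e -> forall k : 'I_m, inTheta L lam e (row k (S e)))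
  (HSPi : forall e, inDelta e -> forall k : 'I_m, ~ inPi L (row k (S e))) :
  exists U : {vspace Pdn C N.+1 d},
    (forall g : Pdn C N.+1 d,
        g \in U <->
        (forall e, inDelta e -> forall k : 'I_m,
            in_Sing_restr (poly_of g) (inTheta L lam e) (row k (S e))))
    /\ (\dim U + m * (N - r + 1) * #|[set e : {ffun 'I_r -> 'I_d} | inDelta e]|
        = \dim (fullv : {vspace Pdn C N.+1 d}))%N.
Proof.
have HK : forall e : {ffun 'I_r -> 'I_d}, exists K : 'M[C]_(N - r + 1, N.+1),
    row_free K /\ (forall v, inTheta L lam e v <-> (v <= K)%MS).
  move=> e; have [K [Kf KE]] := Wbasis (fun i => lam i (e i)) HL HrN.
  by exists K; split => // v; exact: KE.
have [K HKe] := fin_all_exists HK.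
have HPsi : forall e, exists Psi : 'M[C]_(N.+1, N - r + 1), K e *m Psi = 1%:M.
  by move=> e; apply/row_freeP; case: (HKe e).
have [Psi HPsie] := fin_all_exists HPsi.
have HQ : forall e, exists Q : 'M[C]_(N.+1, m), inDelta e -> S e *m Q = 1%:M.
  move=> e; case De: (inDelta e); last by exists 0.
  by have /row_freeP [Q HQ] := HSfree e De; exists Q.
have [Q HQe] := fin_all_exists HQ.
pose Dl := {e : {ffun 'I_r -> 'I_d} | inDelta e}.
pose I := (Dl * 'I_m * 'I_(N - r + 1))%type.
pose wI (i : I) := row i.2 (K (val i.1.1)).
pose sI (i : I) := row i.1.2 (S (val i.1.1)).
pose f := linfun (@Phi C N.+1 d I wI sI).
have fE : forall g, f g = Phi wI sI g by move=> g; rewrite lfunE.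
exists (lker f); split.
  move=> g; rewrite memv_ker fE; split.
    move=> /eqP /Phi_eq0 H e De k.
    set x := row k (S e).
    have Hx : inTheta L lam e x := HSTheta e De k.
    have Hv : forall v, inTheta L lam e v -> Dir (poly_of g) v x = 0.
      move=> v /(proj1 ((HKe e).2 v)) /submxP [a ->]; rewrite Dir_mulmx big1 // => j _.
      by have := H ((exist _ e De, k), j); rewrite /wI /sI /= => ->; rewrite mulr0.
    split => //.
    - apply/negP => /eqP x0; apply: (HSPi e De k); rewrite -/x x0 => j.
      by rewrite /lform big1 // => t _; rewrite mxE mulr0.
    - have := Euler_poly_of g x; rewrite Hv // => /esym/eqP; rewrite mulf_eq0 pnatr_eq0.
      by case/orP => [/eqP d0|/eqP //]; exfalso; lia.
  move=> H; apply/eqP/Phi_eq0 => [[[es k] j]]; rewrite /wI /sI /=.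
  have [_ _ _ Hd'] := H (val es) (valP es) k; apply: Hd'.
  by apply/(proj2 ((HKe _).2 _)); exact: row_sub.
have Hdelta : forall i : I, delta_mx 0 (enum_rank i) \in limg f.
  pose dl (i : I) : 'rV[C]_#|{: I}| := delta_mx 0 (enum_rank i).
  have Hpoly : forall P, P \is d.-homog ->
      \sum_(i : I) Dir P (wI i) (sI i) *: dl i \in limg f.
    by move=> P /poly_of_surj [g <-]; rewrite -Phi_sum -fE; exact: memv_img (memvf g).
  suff H : forall n0 (i : I), (d - esize (val i.1.1) <= n0)%N -> dl i \in limg f.
    by move=> i; exact: H _ i (leqnn _).
  elim=> [|n0 IH] [[es k] j] /= hn.
    by exfalso; have : (esize (sval es) + 3 <= d)%N := valP es; lia.
  have De0 : (esize (sval es) + 3 <= d)%N := valP es.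
  set e := sval es in hn De0 *.
  have De : inDelta e := De0.
  have IH' : forall i : I, (esize e < esize (val i.1.1))%N -> dl i \in limg f.
    move=> i lt; apply: IH; lia.
  pose Ds := (d - esize e)%N.
  have HDs : (3 <= Ds)%N by rewrite /Ds; lia.
  pose h := hpoly L lam e.
  have hhom : forall F, F \is Ds.-homog -> h * F \is d.-homog.
    move=> F HF; have := dhomogM (hpoly_homog L lam e) HF.
    by rewrite /Ds subnKC //; lia.
  have Hvan : forall F (i : I), i.1.1 != es -> ~~ [forall t, e t <= val i.1.1 t]%N ->
      Dir (h * F) (wI i) (sI i) = 0.
    move=> F i _ /forallPn [t]; rewrite -ltnNge => lt.
    have Hw : inTheta L lam (val i.1.1) (wI i) by apply/(proj2 ((HKe _).2 _)); exact: row_sub.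
    have Hs : inTheta L lam (val i.1.1) (sI i) := HSTheta _ (valP i.1.1) _.
    have [H1 H2] := hpoly_vanish lt Hw Hs.
    by rewrite DirM H1 H2 !mul0r add0r.
  have Hblock : forall F, F \is Ds.-homog ->
      \sum_(i : I | i.1.1 == es) Dir (h * F) (wI i) (sI i) *: dl i \in limg f.
    move=> F HF; have := Hpoly _ (hhom F HF).
    rewrite (bigID (fun i : I => i.1.1 == es)) /= rpredDr //.
    apply: rpred_sum => i ine.
    case: (boolP [forall t, e t <= val i.1.1 t]%N) => [ge|nge]; last by rewrite Hvan // scale0r rpred0.
    apply: rpredZ; apply: IH'; apply: esize_lt => [t|]; first exact: (forallP ge t).
    by apply: contra ine => /eqP E; apply/eqP; apply: val_inj; rewrite /= -E.
  have Ke : K e *m Psi e = 1%:M := HPsie e.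
  have Qe : S e *m Q e = 1%:M := HQe e De.
  pose phi := (col k (Q e))^T.
  pose sk := row k (S e).
  have phik : forall k', lin phi (row k' (S e)) = (k' == k)%:R.
    by move=> k'; rewrite lin_col Qe mxE.
  have hs : evalv h sk != 0.
    exact: (hpoly_eval_neq0 Hlam_inj (HSTheta e De k) (l0_neq0 (HSTheta e De k) (HSPi e De k))).
  pose Yv c := \sum_(i : I | i.1.1 == es) ((i.1.2 == k)%:R * lin c (wI i)) *: dl i.
  have YvB : forall c1 c2 a, Yv (c1 - a *: c2) = Yv c1 - a *: Yv c2.
    move=> c1 c2 a; rewrite /Yv scaler_sumr -sumrB; apply: eq_bigr => i _.
    by rewrite linB linZ scalerA -scalerBl; congr (_ *: _); ring.
  have Y1 : forall c, lin c sk = 0 -> Yv c \in limg f.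
    move=> c c0.
    have HF : linp phi ^+ Ds.-1 * linp c \is Ds.-homog.
      have := dhomogM (dhomogMn Ds.-1 (linp_homog phi)) (linp_homog c).
      by rewrite mul1n addn1 prednK //; lia.
    have := Hblock _ HF.
    have -> : \sum_(i : I | i.1.1 == es) Dir (h * (linp phi ^+ Ds.-1 * linp c)) (wI i) (sI i) *: dl i
              = evalv h sk *: Yv c.
      rewrite /Yv scaler_sumr; apply: eq_bigr => -[[es' k'] j'] /= /eqP ->.
      rewrite /wI /sI /= scalerA; congr (_ *: _).
      case: (eqVneq k' k) => [->|nk].
        by rewrite mul1r P1_same // phik eqxx.
      by rewrite P1_other // ?phik ?(negbTE nk) // mul0r mulr0.
    move=> Hm'; rewrite -[Yv c](scalerK hs); exact: memvZ.
  pose beta := \row_t evalv (mderiv t h) sk + (evalv h sk * Ds%:R) *: phi.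
  have Y2 : Yv beta \in limg f.
    have HF : linp phi ^+ Ds \is Ds.-homog.
      by have := dhomogMn Ds (linp_homog phi); rewrite mul1n.
    have := Hblock _ HF.
    have -> : \sum_(i : I | i.1.1 == es) Dir (h * linp phi ^+ Ds) (wI i) (sI i) *: dl i = Yv beta.
      rewrite /Yv; apply: eq_bigr => -[[es' k'] j'] /= /eqP ->.
      rewrite /wI /sI /=; congr (_ *: _).
      case: (eqVneq k' k) => [->|nk].
        by rewrite P2_same ?phik ?eqxx // linD linZ -Dir_lincomb mul1r.
      rewrite P2_other ?phik ?(negbTE nk) //; [by rewrite mul0r | lia].
    done.
  have betas : lin beta sk != 0.
    rewrite linD linZ -Dir_lincomb (Euler_homog _ (hpoly_homog L lam e)) phik eqxx.
    have -> : (esize e)%:R * evalv h sk + evalv h sk * Ds%:R * 1 = evalv h sk * d%:R.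
      by rewrite mulr1 mulrC -mulrDr -natrD /Ds subnKC //; lia.
    by rewrite mulf_neq0 // pnatr_eq0 -lt0n.
  have Y3 : forall c, Yv c \in limg f.
    move=> c; pose a := lin c sk / lin beta sk.
    have -> : Yv c = Yv (c - a *: beta) + a *: Yv beta by rewrite YvB subrK.
    apply: memvD; last exact: memvZ.
    by apply: Y1; rewrite linB linZ /a divfK // subrr.
  pose psi := (col j (Psi e))^T.
  have := Y3 psi.
  have -> : Yv psi = dl ((es, k), j).
    rewrite /Yv (bigD1 ((es, k), j)) //= big1.
      by rewrite /wI /= lin_col Ke mxE !eqxx mulr1 scale1r addr0.
    move=> -[[es' k'] j'] /andP [/eqP /= -> ne]; rewrite /wI /= lin_col Ke mxE.
    case: (eqVneq k' k) => [Ek|nk]; last by rewrite mul0r scale0r.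
    case: (eqVneq j' j) => [Ej|nj]; last by rewrite mulr0 scale0r.
    by move: ne; rewrite Ek Ej eqxx.
  done.


have Himg : limg f = fullv.
  apply/eqP; rewrite eq_sym eqEdim dimvS ?subvf // andbT.
  apply/subvP => y _; rewrite [y]row_sum_delta; apply: memv_suml => j _; apply: memvZ.
  by rewrite -[j]enum_valK; exact: Hdelta.
have := limg_ker_dim f fullv; rewrite capfv Himg => <-.
congr (_ + _)%N; rewrite dimvf /dim /= card_prod card_prod card_sig cardsE !card_ord mul1n.
rewrite (@eq_card _ _ [pred x | inDelta x]) //.
by rewrite mulnC mulnA.
Qed.
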